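(* Let $h_1,h_2,h$ be flow graphs over a flow monoid $\mathbb{M}$ with $h_1\approx h_2$. Then $h_1\# h$ if and only if $h_2\# h$, and in case of definedness, $h_1*h\approx h_2*h$.
   Context: A flow monoid is a commutative monoid $(\mathbb{M},+,0)$ such that $n\le m :\iff \exists o.\ m=n+o$ is a partial order in which every ascending chain $K$ has a least upper bound $\bigsqcup K$, and $n+\bigsqcup K=\bigsqcup(n+K)$. $\mathcal{C}(\mathbb{M}\to\mathbb{M})$ is the set of functions commuting with least upper bounds of ascending chains. Infinite sums denote least upper bounds of finite partial sums. A flow graph is $h=(X,E,\mathit{in})$ with $X\subseteq\mathbb{N}$ finite, $E:X\times\mathbb{N}\to\mathcal{C}(\mathbb{M}\to\mathbb{M})$, $\mathit{in}:(\mathbb{N}\setminus X)\times X\to\mathbb{M}$; $\mathit{in}_x=\sum_{y\in\mathbb{N}\setminus X}\mathit{in}(y,x)$; the flow $h.\mathit{flow}$ is the least $\mathit{flow}:X\to\mathbb{M}$ with $\mathit{flow}(x)=\mathit{in}_x+\sum_{y\in X}E(y,x)(\mathit{flow}(y))$; the outflow is $h.\mathit{out}(x,y)=E(x,y)(h.\mathit{flow}(x))$ for $x\in X$, $y\notin X$. Composition: $h_1\#\#h_2$ iff $X_1\cap X_2=\emptyset$ and for all $x\in X_1,y\in X_2$, $h_1.\mathit{out}(x,y)=h_2.\mathit{in}(x,y)$ and $h_2.\mathit{out}(y,x)=h_1.\mathit{in}(y,x)$; $h_1\uplus h_2=(X_1\uplus X_2,E_1\uplus E_2,(\mathit{in}_1\uplus\mathit{in}_2)|_{(\mathbb{N}\setminus(X_1\uplus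 X_2))\times(X_1\uplus X_2)})$; $h_1\# h_2$ iff $h_1\#\#h_2$ and $h_1.\mathit{flow}\uplus h_2.\mathit{flow}=(h_1\uplus h_2).\mathit{flow}$, and then $h_1*h_2=h_1\uplus h_2$. Transfer function: for $h=(X,E,\mathit{in})$ and any inflow $\mathit{in}':(\mathbb{N}\setminus X)\times X\to\mathbb{M}$, $\mathsf{tf}(h)(\mathit{in}')$ is the outflow of the flow graph $(X,E,\mathit{in}')$. For an inflow $\mathit{in}$, $\mathsf{tf}(h_1)=_{\mathit{in}}\mathsf{tf}(h_2)$ means $\mathsf{tf}(h_1)(\mathit{in}')=\mathsf{tf}(h_2)(\mathit{in}')$ for all $\mathit{in}'\le\mathit{in}$ (pointwise). Contextual equivalence $h_1\approx h_2$ means $h_1.X=h_2.X$, $h_1.\mathit{in}=h_2.\mathit{in}$ and $\mathsf{tf}(h_1)=_{h_1.\mathit{in}}\mathsf{tf}(h_2)$. *)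

(* Defs.v *)
From HB Require Import structures.
From mathcomp Require Import all_boot.
From mathcomp Require Import finmap.
From Stdlib Require Import ClassicalEpsilon.

Set Implicit Arguments.
Unset Strict Implicit.
Unset Printing Implicit Defensive.

Local Open Scope fset_scope.

Definition mle (T : Type) (add : T -> T -> T) (n m : T) : Prop :=
  exists o, m = add n o.

Definition ascending (T : Type) (add : T -> T -> T) (K : nat -> T) : Prop :=
  forall i, mle add (K i) (K i.+1).

Definition is_lub (T : Type) (add : T -> T -> T) (K : nat -> T) (l : T) : Prop :=
  (forall i, mle add (K i) l) /\
  (forall u, (forall i, mle add (K i) u) -> mle add l u).

Record flow_monoid := FlowMonoid {
  fm_car :> Type;
  fm_add : fm_car -> fm_car -> fm_car;
  fm_zero : fm_car;
  fm_addA : forall a b c, fm_add a (fm_add b c) = fm_add (fm_add a b) c;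
  fm_addC : forall a b, fm_add a b = fm_add b a;
  fm_add0 : forall a, fm_add fm_zero a = a;
  (* <= is a partial order (reflexivity/transitivity are automatic) *)
  fm_antisym : forall a b, mle fm_add a b -> mle fm_add b a -> a = b;
  fm_lub_ex : forall K, ascending fm_add K -> exists l, is_lub fm_add K l;
  fm_add_lub : forall n K l, ascending fm_add K -> is_lub fm_add K l ->
      is_lub fm_add (fun i => fm_add n (K i)) (fm_add n l)
}.

Section FlowDefs.
Variable M : flow_monoid.

Local Notation "a + b" := (fm_add a b).
Local Notation "0" := (fm_zero M).
Local Notation "a <= b" := (mle (@fm_add M) a b).

Definition sup (K : nat -> M) : M :=
  epsilon (inhabits 0) (is_lub (@fm_add M) K).

Definition continuous (f : M -> M) : Prop :=
  forall K l, ascending (@fm_add M) K -> is_lub (@fm_add M) K l ->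
    is_lub (@fm_add M) (fun i => f (K i)) (f l).

Definition msum (s : seq nat) (F : nat -> M) : M :=
  \big[@fm_add M/0]_(y <- s) F y.

(* E and in are represented by
   total functions; only their values on the domains X x N, resp.
   (N \ X) x X, are ever used (all notions below only look at those). *)

Record flow_graph := FlowGraph {
  fg_X : {fset nat};
  fg_E : nat -> nat -> M -> M;
  fg_in : nat -> nat -> M;
  fg_E_cont : forall x y, x \in fg_X -> continuous (fg_E x y)
}.

(* in_x = sum_{y in N \ X} in(y,x), the lub of the finite partial sums *)
Definition inflow (h : flow_graph) (x : nat) : M :=
  sup (fun n => \big[@fm_add M/0]_(0 <= y < n | y \notin fg_X h) fg_in h y x).

Definition is_flow (h : flow_graph) (f : nat -> M) : Prop :=
  forall x, x \in fg_X h ->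
    f x = inflow h x + msum (fg_X h) (fun y => fg_E h y x (f y)).

Definition is_least_flow (h : flow_graph) (f : nat -> M) : Prop :=
  is_flow h f /\
  forall g, is_flow h g -> forall x, x \in fg_X h -> f x <= g x.

(* h.flow : the least flow (its values outside X are irrelevant) *)
Definition flow (h : flow_graph) : nat -> M :=
  epsilon (inhabits (fun _ => 0)) (is_least_flow h).

Definition out (h : flow_graph) (x y : nat) : M := fg_E h x y (flow h x).

Definition comp_pre (h1 h2 : flow_graph) : Prop :=
  [disjoint fg_X h1 & fg_X h2] /\
  (forall x y, x \in fg_X h1 -> y \in fg_X h2 -> out h1 x y = fg_in h2 x y) /\
  (forall x y, x \in fg_X h1 -> y \in fg_X h2 -> out h2 y x = fg_in h1 y x).

Lemma union_E_cont (h1 h2 : flow_graph) :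
  forall x y, x \in fg_X h1 `|` fg_X h2 ->
    continuous (if x \in fg_X h1 then fg_E h1 x y else fg_E h2 x y).
Proof.
move=> x y; rewrite in_fsetU; case: ifP => [Hx _|_ /= Hx].
  exact: fg_E_cont.
exact: fg_E_cont.
Qed.

(* h1 (+) h2 = (X1 (+) X2, E1 (+) E2, (in1 (+) in2) restricted); used only
   when X1, X2 are disjoint.  The restriction of the inflow to
   (N \ (X1 u X2)) x (X1 u X2) is implicit in the junk-value convention. *)
Definition union (h1 h2 : flow_graph) : flow_graph :=
  @FlowGraph (fg_X h1 `|` fg_X h2)
    (fun x y => if x \in fg_X h1 then fg_E h1 x y else fg_E h2 x y)
    (fun y x => if x \in fg_X h1 then fg_in h1 y x else fg_in h2 y x)
    (@union_E_cont h1 h2).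

Definition comp_def (h1 h2 : flow_graph) : Prop :=
  comp_pre h1 h2 /\
  forall x, x \in fg_X h1 `|` fg_X h2 ->
    flow (union h1 h2) x = (if x \in fg_X h1 then flow h1 x else flow h2 x).

Definition fg_comp (h1 h2 : flow_graph) : flow_graph := union h1 h2.

Definition with_inflow (h : flow_graph) (in' : nat -> nat -> M) : flow_graph :=
  @FlowGraph (fg_X h) (fg_E h) in' (@fg_E_cont h).

Definition tf (h : flow_graph) (in' : nat -> nat -> M) : nat -> nat -> M :=
  out (with_inflow h in').

Definition tf_eq_below (inf : nat -> nat -> M) (h1 h2 : flow_graph) : Prop :=
  forall in' : nat -> nat -> M,
    (forall y x, y \notin fg_X h1 -> x \in fg_X h1 -> in' y x <= inf y x) ->
    forall x y, x \in fg_X h1 -> y \notin fg_X h1 -> tf h1 in' x y = tf h2 in' x y.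

Definition ctx_equiv (h1 h2 : flow_graph) : Prop :=
  fg_X h1 = fg_X h2 /\
  (forall y x, y \notin fg_X h1 -> x \in fg_X h1 -> fg_in h1 y x = fg_in h2 y x) /\
  tf_eq_below (fg_in h1) h1 h2.

End FlowDefs.

(* Main.v *)
From HB Require Import structures.
Require Import Defs.
From mathcomp Require Import all_boot.
From mathcomp Require Import finmap.
From Stdlib Require Import ClassicalEpsilon FunctionalExtensionality.

Set Implicit Arguments.
Unset Strict Implicit.
Unset Printing Implicit Defensive.
Local Open Scope fset_scope.

Section Aux.
Variable M : flow_monoid.
HB.instance Definition _ := Monoid.isComLaw.Build (fm_car M) (fm_zero M) (@fm_add M) (@fm_addA M) (@fm_addC M) (@fm_add0 M).

Local Notation "a +m b" := (@fm_add M a b) (at level 50, left associativity).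
Local Notation "a <=m b" := (mle (@fm_add M) a b) (at level 70).
Local Notation z := (fm_zero M).
Implicit Types h : flow_graph M.

Lemma addm0 (a : M) : a +m z = a.
Proof. by rewrite fm_addC fm_add0. Qed.

Lemma le_refl (a : M) : a <=m a.
Proof. by exists z; rewrite addm0. Qed.

Lemma le_trans (a b c : M) : a <=m b -> b <=m c -> a <=m c.
Proof. by move=> [o ->] [p ->]; exists (o +m p); rewrite fm_addA. Qed.

Lemma le0 (a : M) : z <=m a.
Proof. by exists a; rewrite fm_add0. Qed.

Lemma le_addr (a b : M) : a <=m a +m b.
Proof. by exists b. Qed.

Lemma leD2l (a b c : M) : a <=m b -> c +m a <=m c +m b.
Proof. by move=> [o ->]; exists o; rewrite fm_addA. Qed.

Lemma leD (a b c d : M) : a <=m b -> c <=m d -> a +m c <=m b +m d.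
Proof.
move=> H1 H2; apply: (le_trans (leD2l a H2)).
by rewrite (fm_addC a) (fm_addC b); apply: leD2l.
Qed.

Lemma le_antisym (a b : M) : a <=m b -> b <=m a -> a = b.
Proof. exact: fm_antisym. Qed.

Lemma msum_le (s : seq nat) (F G : nat -> M) :
  (forall y, y \in s -> F y <=m G y) -> msum s F <=m msum s G.
Proof.
elim: s => [|y s IH] H; rewrite /msum ?big_nil ?big_cons; first exact: le_refl.
apply: leD; first by apply: H; rewrite inE eqxx.
by apply: IH => x Hx; apply: H; rewrite inE Hx orbT.
Qed.

Lemma msum_eq (s : seq nat) (F G : nat -> M) :
  (forall y, y \in s -> F y = G y) -> msum s F = msum s G.
Proof. by move=> H; apply: eq_big_seq. Qed.

Lemma cont_mono (f : M -> M) : continuous f -> forall a b, a <=m b -> f a <=m f b.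
Proof.
move=> Hf a b Hab.
pose K := fun i : nat => if i is 0 then a else b.
have Ka : ascending (@fm_add M) K by case=> [|i] /=; [exact: Hab| exact: le_refl].
have Kl : is_lub (@fm_add M) K b.
  split; first by case=> [|i] /=; [exact: Hab|exact: le_refl].
  by move=> u Hu; exact: (Hu 1).
by have [H _] := Hf K b Ka Kl; exact: (H 0).
Qed.

Lemma lub_unique K (l l' : M) : is_lub (@fm_add M) K l -> is_lub (@fm_add M) K l' -> l = l'.
Proof. by move=> [H1 H2] [H3 H4]; apply: le_antisym; [apply: H2|apply: H4]. Qed.

Lemma chain_mono K : ascending (@fm_add M) K -> forall i j, (i <= j)%N -> K i <=m K j.
Proof.
move=> HK i j /subnK <-; elim: (j - i)%N => [|n IH]; first exact: le_refl.
by apply: (le_trans IH); rewrite addSn; apply: HK.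
Qed.

Lemma sup_spec K : ascending (@fm_add M) K -> is_lub (@fm_add M) K (sup K).
Proof.
move=> HK; rewrite /sup; apply: epsilon_spec; exact: fm_lub_ex.
Qed.

Lemma sup_eq K l : ascending (@fm_add M) K -> is_lub (@fm_add M) K l -> sup K = l.
Proof. by move=> HK Hl; apply: lub_unique (sup_spec HK) Hl. Qed.

Lemma lub_const (c : M) : is_lub (@fm_add M) (fun _ => c) c.
Proof. by split=> [i|u Hu]; [exact: le_refl| exact: (Hu 0)]. Qed.

Lemma asc_const (c : M) : ascending (@fm_add M) (fun _ => c).
Proof. by move=> i; exact: le_refl. Qed.

Lemma lub_shift K l N : ascending (@fm_add M) K -> is_lub (@fm_add M) K l ->
  is_lub (@fm_add M) (fun n => K (n + N)%N) l.
Proof.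
move=> HK [H1 H2]; split=> [i|u Hu]; first exact: H1.
apply: H2 => i; apply: le_trans (Hu i); apply: chain_mono => //; exact: leq_addr.
Qed.

Lemma lub_ext K K' (l : M) : (forall n, K n = K' n) -> is_lub (@fm_add M) K l -> is_lub (@fm_add M) K' l.
Proof. by move=> H; have -> : K = K' by apply: functional_extensionality. Qed.

Lemma lub_le K (l u : M) : is_lub (@fm_add M) K l -> (forall i, K i <=m u) -> l <=m u.
Proof. by move=> [_ H]; apply: H. Qed.

Lemma lub_mono K K' (l l' : M) : is_lub (@fm_add M) K l -> is_lub (@fm_add M) K' l' ->
  (forall i, K i <=m K' i) -> l <=m l'.
Proof.
move=> H [H' _] Hi; apply: (lub_le H) => i; exact: le_trans (Hi i) (H' i).
Qed.

Lemma asc_add A B : ascending (@fm_add M) A -> ascending (@fm_add M) B ->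
  ascending (@fm_add M) (fun n => A n +m B n).
Proof. by move=> HA HB i; apply: leD. Qed.

Lemma lub_add A B (a b : M) : ascending (@fm_add M) A -> ascending (@fm_add M) B ->
  is_lub (@fm_add M) A a -> is_lub (@fm_add M) B b ->
  is_lub (@fm_add M) (fun n => A n +m B n) (a +m b).
Proof.
move=> HA HB Ha Hb; split=> [i|u Hu].
  by apply: leD; [exact: Ha.1|exact: Hb.1].
have H1 : forall i, A i +m b <=m u.
  move=> i; have := fm_add_lub (A i) HB Hb => Hl.
  apply: (lub_le Hl) => j; apply: le_trans (Hu (maxn i j)).
  by apply: leD; apply: chain_mono => //; rewrite ?leq_maxl ?leq_maxr.
have := fm_add_lub b HA Ha => Hl.
rewrite fm_addC; apply: (lub_le Hl) => i; rewrite fm_addC; exact: H1.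
Qed.

Lemma lub_msum (s : seq nat) (F : nat -> nat -> M) (l : nat -> M) :
  (forall y, y \in s -> ascending (@fm_add M) (fun n => F n y)) ->
  (forall y, y \in s -> is_lub (@fm_add M) (fun n => F n y) (l y)) ->
  ascending (@fm_add M) (fun n => msum s (F n)) /\
  is_lub (@fm_add M) (fun n => msum s (F n)) (msum s l).
Proof.
elim: s => [|y s IH] HA HL.
  have -> : (fun n => msum [::] (F n)) = (fun _ => z).
    by apply: functional_extensionality => n; rewrite /msum big_nil.
  rewrite /msum big_nil.
  by split; [exact: asc_const| exact: lub_const].
have [IA IL] : ascending (@fm_add M) (fun n => msum s (F n)) /\
  is_lub (@fm_add M) (fun n => msum s (F n)) (msum s l).
  by apply: IH => x Hx; [apply: HA|apply: HL]; rewrite inE Hx orbT.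
have -> : (fun n => msum (y :: s) (F n)) = (fun n => F n y +m msum s (F n)).
  by apply: functional_extensionality => n; rewrite /msum big_cons.
rewrite {3}/msum big_cons.
have Ay : ascending (@fm_add M) (fun n => F n y) by apply: HA; rewrite inE eqxx.
split; first exact: asc_add.
by apply: lub_add => //; apply: HL; rewrite inE eqxx.
Qed.


Definition Fop (h : flow_graph M) (g : nat -> M) (x : nat) : M :=
  inflow h x +m msum (fg_X h) (fun y => fg_E h y x (g y)).
Definition pre (h : flow_graph M) (g : nat -> M) :=
  forall x, x \in fg_X h -> Fop h g x <=m g x.

Lemma Fop_mono h g g' : (forall y, y \in fg_X h -> g y <=m g' y) ->
  forall x, Fop h g x <=m Fop h g' x.
Proof.
move=> H x; apply: leD2l; apply: msum_le => y Hy.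
by apply: cont_mono; [apply: fg_E_cont|apply: H].
Qed.

Definition kl h n := iter n (Fop h) (fun _ => z).

Lemma kl_asc h x : ascending (@fm_add M) (fun n => kl h n x).
Proof.
move=> n; elim: n x => [|n IH] x; first exact: le0.
by apply: Fop_mono => y _; apply: IH.
Qed.

Definition lim h x := sup (fun n => kl h n x).

Lemma lim_lub h x : is_lub (@fm_add M) (fun n => kl h n x) (lim h x).
Proof. exact: sup_spec (kl_asc h x). Qed.

Lemma Fop_lim h x : x \in fg_X h -> lim h x = Fop h (lim h) x.
Proof.
move=> _.
have [_ L] := @lub_msum (fg_X h) (fun n y => fg_E h y x (kl h n y))
   (fun y => fg_E h y x (lim h y))
   (fun y Hy n => cont_mono (fg_E_cont x Hy) (kl_asc h y n))
   (fun y Hy => fg_E_cont x Hy (kl_asc h y) (lim_lub h y)).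
have [A _] := @lub_msum (fg_X h) (fun n y => fg_E h y x (kl h n y))
   (fun y => fg_E h y x (lim h y))
   (fun y Hy n => cont_mono (fg_E_cont x Hy) (kl_asc h y n))
   (fun y Hy => fg_E_cont x Hy (kl_asc h y) (lim_lub h y)).
have L2 := fm_add_lub (inflow h x) A L.
have L3 := lub_shift 1 (kl_asc h x) (lim_lub h x).
apply: lub_unique L3 _; apply: lub_ext L2 => n; by rewrite addn1.
Qed.

Lemma lim_pre h g : pre h g -> forall x, x \in fg_X h -> lim h x <=m g x.
Proof.
move=> Hg x Hx; apply: (lub_le (lim_lub h x)) => n.
elim: n x Hx => [|n IH] x Hx; first exact: le0.
apply: le_trans (Hg x Hx); exact: Fop_mono.
Qed.

Lemma is_flow_pre h g : is_flow h g -> pre h g.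
Proof. by move=> H x Hx; rewrite /Fop -H //; exact: le_refl. Qed.

Lemma flow_least h : is_least_flow h (flow h).
Proof.
rewrite /flow; apply: epsilon_spec; exists (lim h); split.
  by move=> x Hx; apply: Fop_lim.
by move=> g Hg; apply: lim_pre; apply: is_flow_pre.
Qed.

Lemma flow_is h : is_flow h (flow h).
Proof. exact: (flow_least h).1. Qed.

Lemma flow_eq h x : x \in fg_X h -> flow h x = Fop h (flow h) x.
Proof. exact: flow_is. Qed.

Lemma flow_pre h g : pre h g -> forall x, x \in fg_X h -> flow h x <=m g x.
Proof.
move=> Hg x Hx; apply: le_trans (lim_pre Hg Hx).
apply: (flow_least h).2 Hx => y Hy; exact: Fop_lim.
Qed.

Lemma flow_ext h h' : fg_X h = fg_X h' ->
  (forall x, x \in fg_X h -> inflow h x = inflow h' x) ->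
  (forall y x, y \in fg_X h -> fg_E h y x = fg_E h' y x) ->
  forall x, x \in fg_X h -> flow h x = flow h' x.
Proof.
move=> HX Hi HE.
have HF : forall g x, x \in fg_X h -> Fop h g x = Fop h' g x.
  move=> g x Hx; rewrite /Fop Hi // -HX; congr (_ +m _).
  by apply: msum_eq => y Hy; rewrite HE.
move=> x Hx; apply: le_antisym.
  apply: flow_pre => // y Hy; rewrite HF //; rewrite HX in Hy.
  rewrite -flow_eq //; exact: le_refl.
rewrite HX in Hx; apply: flow_pre => // y Hy.
have Hy' : y \in fg_X h by rewrite HX.
by rewrite -HF // -flow_eq //; exact: le_refl.
Qed.

Lemma inflow_eq h h' x : fg_X h = fg_X h' ->
  (forall y, y \notin fg_X h -> fg_in h y x = fg_in h' y x) ->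
  inflow h x = inflow h' x.
Proof.
move=> HX H; rewrite /inflow -HX; congr sup; apply: functional_extensionality => n.
by apply: eq_bigr => y Hy; apply: H.
Qed.


Lemma psum_asc (P : pred nat) (g : nat -> M) :
  ascending (@fm_add M) (fun n => \big[@fm_add M/z]_(0 <= y < n | P y) g y).
Proof.
move=> n; rewrite (big_mkcond P) (big_mkcond P) big_nat_recr //=; exact: le_addr.
Qed.

Lemma bound_exists (s : seq nat) : exists N, forall y, y \in s -> (y < N)%N.
Proof.
elim: s => [|a s [N HN]]; first by exists 0%N.
exists (maxn a.+1 N) => y; rewrite inE => /orP [/eqP ->|Hy].
  by rewrite leq_max leqnn.
by rewrite leq_max HN ?orbT.
Qed.

Lemma msum_fsetU (A B : {fset nat}) F : [disjoint A & B] ->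
  msum (A `|` B) F = msum A F +m msum B F.
Proof.
move=> /fdisjointP D; rewrite /msum -big_cat; apply: perm_big.
apply: uniq_perm; first exact: fset_uniq.
  rewrite cat_uniq !fset_uniq /= andbT; apply/hasPn => y HyB /=.
  by apply/negP => HyA; have := D y HyA; rewrite HyB.
by move=> y; rewrite mem_cat in_fsetU.
Qed.

Lemma psumB_eq (B : {fset nat}) c n : (forall y, y \in B -> (y < n)%N) ->
  \big[@fm_add M/z]_(0 <= y < n | y \in B) c y = msum B c.
Proof.
move=> Hn; rewrite /msum -big_filter; apply: perm_big.
apply: uniq_perm; [apply: filter_uniq; exact: iota_uniq | exact: fset_uniq |].
move=> y; rewrite mem_filter mem_index_iota /=.
by case Hy: (y \in B) => //=; rewrite Hn.
Qed.


Lemma inflow_split (A B : {fset nat}) (i c : nat -> M) : [disjoint A & B] ->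
  sup (fun n => \big[@fm_add M/z]_(0 <= y < n | y \notin A) (if y \in B then c y else i y))
  = sup (fun n => \big[@fm_add M/z]_(0 <= y < n | y \notin A `|` B) i y) +m msum B c.
Proof.
move=> D; have /fdisjointP D' := D.
set P := fun n => _; set Q := fun n => _.
have HPQ : forall n, P n = Q n +m \big[@fm_add M/z]_(0 <= y < n | y \in B) c y.
  move=> n; rewrite /P /Q (bigID (fun y => y \in B)) /=.
  have E1 : \big[@fm_add M/z]_(0 <= y < n | (y \notin A) && (y \in B))
      (if y \in B then c y else i y) = \big[@fm_add M/z]_(0 <= y < n | y \in B) c y.
    apply: eq_big => [y|y /andP [_ ->] //].
    case HyB : (y \in B); last by rewrite andbF.
    rewrite andbT; apply/negP => HyA; have := D' y HyA; by rewrite HyB.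
  have E2 : \big[@fm_add M/z]_(0 <= y < n | (y \notin A) && (y \notin B))
      (if y \in B then c y else i y) = \big[@fm_add M/z]_(0 <= y < n | y \notin A `|` B) i y.
    apply: eq_big => [y|y /andP [_ /negbTE ->] //].
    by rewrite in_fsetU negb_or.
  by rewrite E1 E2 fm_addC.
have [N HN] := bound_exists B.
have AP : ascending (@fm_add M) P by apply: psum_asc.
have AQ : ascending (@fm_add M) Q by apply: psum_asc.
have L1 := lub_shift N AP (sup_spec AP).
have L2 := lub_shift N AQ (sup_spec AQ).
have L3 := fm_add_lub (msum B c) (fun n => AQ (n + N)%N) L2.
apply: lub_unique L1 _; rewrite fm_addC; apply: lub_ext L3 => n.
rewrite HPQ psumB_eq; first by rewrite fm_addC.
move=> y Hy; by apply: leq_trans (HN y Hy) _; apply: leq_addl.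
Qed.


Definition U ha h (i : nat -> nat -> M) := with_inflow (union ha h) i.
Definition ind h (i : nat -> nat -> M) (f : nat -> M) :=
  fun y x => if y \in fg_X h then fg_E h y x (f y) else i y x.
Definition G ha h i f := with_inflow ha (ind h i f).
Definition S h (g : nat -> M) x := msum (fg_X h) (fun y => fg_E h y x (g y)).

Lemma X_U ha h i : fg_X (U ha h i) = fg_X ha `|` fg_X h.
Proof. by []. Qed.

Lemma FU ha h i g x : [disjoint fg_X ha & fg_X h] ->
  Fop (U ha h i) g x = inflow (U ha h i) x +m (S ha g x +m S h g x).
Proof.
move=> D; have /fdisjointP D' := D.
rewrite /Fop X_U msum_fsetU //; congr (_ +m (_ +m _)).
  by apply: msum_eq => y Hy /=; rewrite Hy.
apply: msum_eq => y Hy /=; case: ifP => // Hy'.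
by have := D' y Hy'; rewrite Hy.
Qed.

Lemma inflowG ha h i f x : [disjoint fg_X ha & fg_X h] ->
  inflow (G ha h i f) x = inflow (U ha h i) x +m S h f x.
Proof.
move=> D; rewrite /inflow /=.
exact: (@inflow_split (fg_X ha) (fg_X h) (fun y => i y x) (fun y => fg_E h y x (f y)) D).
Qed.

Lemma FG ha h i f g x : [disjoint fg_X ha & fg_X h] ->
  Fop (G ha h i f) g x = (inflow (U ha h i) x +m S h f x) +m S ha g x.
Proof. by move=> D; rewrite /Fop inflowG. Qed.

Lemma S_le h g g' x : (forall y, y \in fg_X h -> g y <=m g' y) -> S h g x <=m S h g' x.
Proof.
move=> H; apply: msum_le => y Hy; apply: cont_mono; [exact: fg_E_cont|exact: H].
Qed.

Lemma S_eq h g g' x : (forall y, y \in fg_X h -> g y = g' y) -> S h g x = S h g' x.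
Proof. by move=> H; apply: msum_eq => y Hy; rewrite H. Qed.

Lemma F1 ha h i : [disjoint fg_X ha & fg_X h] ->
  forall x, x \in fg_X ha -> flow (U ha h i) x = flow (G ha h i (flow (U ha h i))) x.
Proof.
move=> D; have /fdisjointP D' := D.
set f := flow (U ha h i); set GG := G ha h i f.
have HXU : forall x, x \in fg_X ha -> x \in fg_X (U ha h i).
  by move=> x Hx; rewrite X_U in_fsetU Hx.
have Ha : forall x, x \in fg_X ha -> flow GG x <=m f x.
  move=> x0 Hx0; apply: (@flow_pre GG f) => // x Hx; rewrite FG // -fm_addA (fm_addC (S h f x)) -FU //.
  rewrite /f -flow_eq ?HXU //; exact: le_refl.
pose g := fun y => if y \in fg_X ha then flow GG y else f y.
have Hg : pre (U ha h i) g.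
  move=> x; rewrite X_U in_fsetU => Hx.
  rewrite FU // (@S_eq ha g (flow GG)); last by move=> y Hy; rewrite /g Hy.
  rewrite (@S_eq h g f); last by move=> y Hy; rewrite /g; case: ifP => // Hy'; have := D' y Hy'; rewrite Hy.
  rewrite /g; case: ifP => Hxa.
    rewrite (fm_addC (S ha _ x)) fm_addA -FG // -flow_eq //; exact: le_refl.
  rewrite /f flow_eq ?X_U ?in_fsetU ?Hx // FU // -/f.
  by apply: leD2l; apply: leD; [apply: S_le|exact: le_refl].
move=> x Hx; apply: le_antisym; last exact: Ha.
by have := flow_pre Hg (HXU x Hx); rewrite /g Hx.
Qed.


Lemma inflowU_eq h1 h2 h i x : fg_X h1 = fg_X h2 ->
  inflow (U h2 h i) x = inflow (U h1 h i) x.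
Proof. by move=> HX; apply: inflow_eq => //; rewrite !X_U HX. Qed.

Lemma tf_step h1 h2 h i : ctx_equiv h1 h2 -> [disjoint fg_X h1 & fg_X h] ->
  (forall y x, y \notin fg_X h1 -> x \in fg_X h1 -> ind h i (flow (U h1 h i)) y x <=m fg_in h1 y x) ->
  forall y x, y \in fg_X h1 -> x \notin fg_X h1 ->
    fg_E h2 y x (flow (G h2 h i (flow (U h1 h i))) y) = fg_E h1 y x (flow (U h1 h i) y).
Proof.
move=> [HX [Hin Htf]] D Bd y x Hy Hx.
rewrite (F1 i D Hy); have := Htf _ Bd y x Hy Hx; rewrite /tf /out /= => ->; by [].
Qed.

Lemma KEY h1 h2 h i : ctx_equiv h1 h2 -> [disjoint fg_X h1 & fg_X h] ->
  (forall y x, y \notin fg_X h1 -> x \in fg_X h1 -> ind h i (flow (U h1 h i)) y x <=m fg_in h1 y x) ->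
  forall x, x \in fg_X h -> flow (U h2 h i) x <=m flow (U h1 h i) x.
Proof.
move=> H D Bd; have [HX [Hin Htf]] := H.
have D2 : [disjoint fg_X h2 & fg_X h] by rewrite -HX.
have /fdisjointP D' := D.
set f := flow (U h1 h i); set G2 := G h2 h i f.
pose g := fun y => if y \in fg_X h2 then flow G2 y else f y.
have Hg : pre (U h2 h i) g.
  move=> x; rewrite X_U in_fsetU => Hx.
  rewrite FU // (@S_eq h2 g (flow G2)); last by move=> y Hy; rewrite /g Hy.
  rewrite (@S_eq h g f); last first.
    move=> y Hy; rewrite /g; case: ifP => // Hy'; rewrite -HX in Hy'.
    by have := D' y Hy'; rewrite Hy.
  rewrite /g; case: ifP => Hx2.
    rewrite (fm_addC (S h2 _ x)) fm_addA -FG // -flow_eq //; exact: le_refl.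
  have -> : S h2 (flow G2) x = S h1 f x.
    rewrite /S -HX; apply: msum_eq => y Hy; apply: (tf_step H D Bd Hy).
    by rewrite HX Hx2.
  rewrite (@inflowU_eq h1 h2 h i x HX) -FU // /f -flow_eq; first exact: le_refl.
  by rewrite X_U in_fsetU HX.
move=> x Hx; have Hx2 : x \notin fg_X h2.
  by apply/negP => Hx2; rewrite -HX in Hx2; have := D' x Hx2; rewrite Hx.
by have := flow_pre Hg (_ : x \in fg_X (U h2 h i)); rewrite /g (negbTE Hx2); apply; rewrite X_U in_fsetU Hx orbT.
Qed.


Lemma ctx_sym h1 h2 : ctx_equiv h1 h2 -> ctx_equiv h2 h1.
Proof.
move=> [HX [Hin Htf]]; split; first by rewrite HX.
split.
  by move=> y x Hy Hx; rewrite -HX in Hy Hx; rewrite Hin.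
move=> i' Bd x y Hx Hy; rewrite -HX in Hx Hy; symmetry; apply: Htf => // y' x' Hy' Hx'.
by rewrite Hin //; apply: Bd; rewrite -HX.
Qed.

Lemma MAIN h1 h2 h i : ctx_equiv h1 h2 -> [disjoint fg_X h1 & fg_X h] ->
  (forall y x, y \notin fg_X h1 -> x \in fg_X h1 -> ind h i (flow (U h1 h i)) y x <=m fg_in h1 y x) ->
  (forall x, x \in fg_X h -> flow (U h2 h i) x = flow (U h1 h i) x) /\
  (forall x, x \in fg_X h1 -> flow (U h2 h i) x = flow (G h2 h i (flow (U h1 h i))) x) /\
  (forall x y, x \in fg_X h1 `|` fg_X h -> y \notin fg_X h1 `|` fg_X h ->
     out (U h1 h i) x y = out (U h2 h i) x y).
Proof.
move=> H D Bd; have [HX [Hin Htf]] := H.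
have D2 : [disjoint fg_X h2 & fg_X h] by rewrite -HX.
have /fdisjointP D' := D.
have K1 := KEY H D Bd.
have Bd2 : forall y x, y \notin fg_X h2 -> x \in fg_X h2 ->
    ind h i (flow (U h2 h i)) y x <=m fg_in h2 y x.
  move=> y x Hy Hx; rewrite -HX in Hy Hx; rewrite -Hin //.
  have := Bd y x Hy Hx; rewrite /ind; case: ifP => // HyX.
  apply: le_trans; apply: cont_mono; [exact: fg_E_cont| exact: K1].
have K2 := KEY (ctx_sym H) D2 Bd2.
have Eq : forall x, x \in fg_X h -> flow (U h2 h i) x = flow (U h1 h i) x.
  by move=> x Hx; apply: le_antisym; [apply: K1|apply: K2].
have Eind : ind h i (flow (U h2 h i)) = ind h i (flow (U h1 h i)).
  apply: functional_extensionality => y; apply: functional_extensionality => x.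
  by rewrite /ind; case: ifP => // Hy; rewrite Eq.
have EG : forall x, x \in fg_X h1 -> flow (U h2 h i) x = flow (G h2 h i (flow (U h1 h i))) x.
  move=> x Hx; rewrite HX in Hx; rewrite (F1 i D2 Hx) /G Eind //.
split=> //; split=> // x y Hx Hy.
rewrite /out /=; case: ifP => Hx1.
  have Hx2 : x \in fg_X h2 by rewrite -HX.
  rewrite Hx2 EG // (F1 i D Hx1).
  have Hy1 : y \notin fg_X h1 by move: Hy; rewrite in_fsetU negb_or => /andP [].
  by have := Htf _ Bd x y Hx1 Hy1; rewrite /tf /out /=.
have Hx2 : (x \in fg_X h2) = false by rewrite -HX.
rewrite Hx2 Eq //; move: Hx; rewrite in_fsetU Hx1 //.
Qed.


Lemma inflow_le h h' x : fg_X h = fg_X h' ->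
  (forall y, y \notin fg_X h -> fg_in h y x <=m fg_in h' y x) ->
  inflow h x <=m inflow h' x.
Proof.
move=> HX H; rewrite /inflow -HX.
apply: lub_mono; [exact: sup_spec (psum_asc _ _)|exact: sup_spec (psum_asc _ _)|] => n.
apply: (big_ind2 (fun a b => a <=m b)); [exact: le_refl| |exact: H].
by move=> ? ? ? ? ? ?; apply: leD.
Qed.

Lemma Bd_of_comp h1 h i : comp_def h1 h ->
  (forall y x, y \notin fg_X h1 `|` fg_X h -> x \in fg_X h1 `|` fg_X h ->
     i y x <=m fg_in (union h1 h) y x) ->
  forall y x, y \notin fg_X h1 -> x \in fg_X h1 -> ind h i (flow (U h1 h i)) y x <=m fg_in h1 y x.
Proof.
move=> [[D [Ho1 Ho2]] Hf] Hi.
have Le : forall x, x \in fg_X h1 `|` fg_X h -> flow (U h1 h i) x <=m flow (union h1 h) x.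
  move=> x0 Hx0; apply: (@flow_pre (U h1 h i) (flow (union h1 h))) => // x Hx.
  have -> : flow (union h1 h) x = Fop (union h1 h) (flow (union h1 h)) x by apply: flow_eq.
  rewrite /Fop; apply: leD; last exact: le_refl.
  by apply: inflow_le => // y Hy; apply: Hi.
move=> y x Hy Hx; rewrite /ind; case: ifP => HyX.
  have HyU : y \in fg_X h1 `|` fg_X h by rewrite in_fsetU HyX orbT.
  apply: le_trans; first by apply: cont_mono; [exact: fg_E_cont|exact: Le].
  rewrite Hf // (negbTE Hy) -Ho2 //; exact: le_refl.
have := Hi y x; rewrite /= Hx; apply.
  by rewrite in_fsetU negb_or Hy HyX.
by rewrite in_fsetU Hx.
Qed.

Lemma transfer h1 h2 h : ctx_equiv h1 h2 -> comp_def h1 h -> comp_def h2 h.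
Proof.
move=> H C; have [HX [Hin Htf]] := H; have [[D [Ho1 Ho2]] Hf] := C.
have /fdisjointP D' := D.
set i := fg_in (union h1 h).
have Bd := Bd_of_comp C (fun y x _ _ => le_refl (i y x)).
have [E1 [E2 _]] := MAIN H D Bd.
have D2 : [disjoint fg_X h2 & fg_X h] by rewrite -HX.
have self1 : forall x, x \in fg_X h1 `|` fg_X h -> flow (U h1 h i) x = flow (union h1 h) x.
  by move=> x Hx; apply: (@flow_ext (U h1 h i) (union h1 h)).
have Ein : forall y x, y \notin fg_X h1 -> x \in fg_X h1 -> fg_in h1 y x = fg_in h2 y x := Hin.
split; first split.
- exact: D2.
- split.
  + move=> x y Hx Hy; rewrite -HX in Hx.
    have Hy1 : y \notin fg_X h1 by apply/negP => Hy1; have := D' y Hy1; rewrite Hy.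
    rewrite -Ho1 //.
    have := Htf (fg_in h1) (fun y x _ _ => le_refl _) x y Hx Hy1; rewrite /tf /out /=.
    have -> : flow h1 x = flow (with_inflow h1 (fg_in h1)) x by apply: flow_ext.
    move=> ->; congr (fg_E h2 x y _).
    have Hx2 : x \in fg_X h2 by rewrite -HX.
    apply: (@flow_ext h2 (with_inflow h2 (fg_in h1))) => // x' Hx'.
    apply: inflow_eq => //= y' Hy'; symmetry; apply: Hin; by rewrite HX.
  + move=> x y Hx Hy; rewrite -HX in Hx.
    have Hy1 : y \notin fg_X h1 by apply/negP => Hy1; have := D' y Hy1; rewrite Hy.
    by rewrite Ho2 // Hin.
move=> x Hx.
have Hx' : x \in fg_X h1 `|` fg_X h by move: Hx; rewrite /= HX.
have -> : flow (union h2 h) x = flow (U h2 h i) x.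
  apply: flow_ext => // x' Hx'' ; apply: inflow_eq => //= y Hy.
  rewrite /i /=; rewrite -HX; case: ifP => // Hx1; rewrite Hin //.
  by move: Hy; rewrite /= in_fsetU negb_or HX => /andP [].
case: ifP => Hx2.
  have Hx1 : x \in fg_X h1 by rewrite HX.
  rewrite E2 //; apply: flow_ext => //= x' Hx'2; apply: inflow_eq => //= y Hy.
  rewrite -HX in Hx'2 Hy; rewrite -Hin // /ind; case: ifP => HyX.
    have HyU : y \in fg_X h1 `|` fg_X h by rewrite in_fsetU HyX orbT.
    by rewrite self1 // Hf // (negbTE Hy) -Ho2.
  by rewrite /i /= Hx'2.
have Hx1 : (x \in fg_X h1) = false by rewrite HX.
have HxX : x \in fg_X h by move: Hx; rewrite in_fsetU Hx2.
by rewrite E1 // self1 // Hf // Hx1.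
Qed.

Lemma comp_equiv h1 h2 h : ctx_equiv h1 h2 -> comp_def h1 h ->
  ctx_equiv (fg_comp h1 h) (fg_comp h2 h).
Proof.
move=> H C; have [HX [Hin Htf]] := H; have [[D _] _] := C.
split; first by rewrite /= HX.
split.
  move=> y x Hy Hx /=; rewrite -HX; case: ifP => // Hx1; apply: Hin => //.
  by move: Hy; rewrite /= in_fsetU negb_or => /andP [].
move=> i' Bi x y Hx Hy.
have Bd := Bd_of_comp C Bi.
have [_ [_ E3]] := MAIN H D Bd.
exact: E3.
Qed.

End Aux.

Theorem theorem1 (M : flow_monoid) (h1 h2 h : flow_graph M) :
  ctx_equiv h1 h2 ->
  (comp_def h1 h <-> comp_def h2 h) /\
  (comp_def h1 h -> ctx_equiv (fg_comp h1 h) (fg_comp h2 h)).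
Proof.
move=> H; split; last exact: comp_equiv.
split; [exact: transfer | exact: transfer (ctx_sym H)].
Qed.
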